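(* For every pair $N_1,N_2$ of phylogenetic networks over the same set $S$ of taxa, $$m(N_1,N_2)=\tfrac12|\Upsilon(N_1)\bigtriangleup\Upsilon(N_2)|.$$
   Context: A phylogenetic network on a finite set $S$ is a finite rooted directed acyclic graph whose leaves are bijectively labeled by $S$. Nodes $u,v$ (possibly in different networks) are equivalent, $u\equiv v$, if both are leaves with the same label, or for some $k\ge1$ both have exactly $k$ children which can be ordered $u_1,\dots,u_k$ and $v_1,\dots,v_k$ with $u_i\equiv v_i$ for all $i$. For a node $v$ of a network, $\kappa(v)$ is the number of nodes in that network equivalent to $v$. Nakhleh's measure: let $U(N_1),U(N_2)$ be maximal sets of pairwise non-equivalent nodes of $N_1,N_2$; for $v_1\in U(N_1)$, $\delta(v_1)=\kappa(v_1)$ if no node of $U(N_2)$ is equivalent to $v_1$, and $\delta(v_1)=\max\{0,\kappa(v_1)-\kappa(v_1')\}$ if $v_1'\in U(N_2)$ is equivalent to $v_1$; $\delta(v_2)$ for $v_2\in U(N_2)$ is defined symmetrically; and $m(N_1,N_2)=\frac12\big(\sum_{v_1\in U(N_1)}\delta(v_1)+\sum_{v_2\in U(N_2)}\delta(v_2)\big)$. The nested label $\ell(v)$ is defined by induction on height (largest length of a path to a leaf): $\ell(v)=\{i\}$ for the leaf labeled $i$, and otherwise $\ell(v)$ is the multiset of nested labels of the children of $v$. $\Upsilon(N)$ is the multiset of nested labels of all nodes of $N$ (multiplicity = number of nodes with that nested label); $\bigtriangleup$ is multiset symmetric difference (multiplicity $|M_1(x)-M_2(x)|$) and $|\cdot|$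 is the sum of multiplicities. *)

(* Defs.v *)
From mathcomp Require Import all_boot all_order all_algebra.
From mathcomp Require Import boolp.

Set Implicit Arguments.
Unset Strict Implicit.
Unset Printing Implicit Defensive.

Section PhyloNetworks.

Variable S : finType.

Record network := Network {
  node : finType;
  edge : rel node;
  root : node;
  leaf_lab : S -> node;
  net_acyclic : forall u v, edge u v -> ~~ connect edge v u;
  net_root_source : forall u, ~~ edge u root;
  net_rooted : forall v, connect edge root v;
  net_lab_inj : injective leaf_lab;
  net_leaves : forall v, [forall w, ~~ edge v w] = (v \in codom leaf_lab)
}.

Definition is_leaf (N : network) (v : node N) : bool := [forall w, ~~ edge v w].

Inductive equiv (N1 N2 : network) : node N1 -> node N2 -> Prop :=
| equiv_leaf (i : S) : equiv (leaf_lab N1 i) (leaf_lab N2 i)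
| equiv_node (u : node N1) (v : node N2) (f : node N1 -> node N2) :
    ~~ is_leaf u -> ~~ is_leaf v ->
    (forall c, edge u c -> edge v (f c)) ->
    {in edge u &, injective f} ->
    (forall d, edge v d -> exists2 c, edge u c & f c = d) ->
    (forall c, edge u c -> equiv c (f c)) ->
    equiv u v.

Definition kappa (N : network) (v : node N) : nat :=
  #|[set w : node N | `[< equiv v w >] ]|.

Definition pairwise_noneq (N : network) (U : {set node N}) : Prop :=
  forall u w, u \in U -> w \in U -> u != w -> ~ equiv u w.

Definition maximal_noneq (N : network) (U : {set node N}) : Prop :=
  pairwise_noneq U /\
  forall U' : {set node N}, U \subset U' -> pairwise_noneq U' -> U' = U.

(* delta(v1) for v1 in U1 relative to U2 (max{0, a-b} = truncated a - b) *)
Definition delta (N1 N2 : network) (U2 : {set node N2}) (v1 : node N1) : nat :=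
  match [pick w in U2 | `[< equiv v1 w >] ] with
  | None => kappa v1
  | Some w => kappa v1 - kappa w
  end.

Definition nakhleh (N1 N2 : network) (U1 : {set node N1}) (U2 : {set node N2})
  : rat :=
  ((\sum_(v1 in U1) delta U2 v1 + \sum_(v2 in U2) delta U1 v2)%N)%:R / 2%:R.

(* A nested label is a finite rooted tree: Leaf i encodes
   {i}, and Node 0 s encodes the multiset of the nested labels in s; the
   multiset is represented canonically by sorting s w.r.t. a fixed total
   order (pickle is injective), so that equality of nested labels is
   Leibniz equality. *)
Definition nlabel := GenTree.tree S.

Definition nl_le (a b : nlabel) : bool := (pickle a <= pickle b)%N.

Definition msetN (s : seq nlabel) : nlabel := GenTree.Node 0 (sort nl_le s).

(* ell with fuel; fuel > height suffices, and height < #|node N| *)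
Fixpoint ell_fuel (N : network) (n : nat) (v : node N) : nlabel :=
  match n with
  | 0 => GenTree.Node 1 [::] (* never reached with enough fuel *)
  | n'.+1 =>
    match [pick i | leaf_lab N i == v] with
    | Some i => GenTree.Leaf i
    | None => msetN [seq ell_fuel n' w | w <- enum (edge v)]
    end
  end.

Definition ell (N : network) (v : node N) : nlabel := ell_fuel #|node N| v.

Definition Upsilon (N : network) : seq nlabel := [seq ell v | v <- enum (node N)].

(* |M1 symdiff M2| = sum over x of |M1(x) - M2(x)| *)
Definition symdiff_size (M1 M2 : seq nlabel) : nat :=
  \sum_(x <- undup (M1 ++ M2))
     ((count_mem x M1 - count_mem x M2) + (count_mem x M2 - count_mem x M1)).

End PhyloNetworks.

(* Main.v *)
Require Import Defs.
From mathcomp Require Import all_boot all_order all_algebra.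
From mathcomp Require Import boolp.

Set Implicit Arguments.
Unset Strict Implicit.
Unset Printing Implicit Defensive.

Lemma count_enum_card (T : finType) (p : pred T) : count p (enum T) = #|p|.
Proof. by rewrite cardE enumT -size_filter /enum_mem. Qed.

Lemma match_perm (T1 T2 R : eqType) (g1 : T1 -> R) (g2 : T2 -> R) (y0 : T2)
  (a : seq T1) (b : seq T2) :
  uniq a -> uniq b -> perm_eq (map g1 a) (map g2 b) ->
  exists f : T1 -> T2,
    [/\ (forall c, c \in a -> f c \in b /\ g2 (f c) = g1 c),
        {in a &, injective f} &
        (forall d, d \in b -> exists2 c, c \in a & f c = d)].
Proof.
elim: a b => [|x a IH] b ua ub hp.
  move: hp => /perm_size; rewrite !size_map; case: b ub => // _ _.
  by exists (fun _ => y0); split.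
move: ua => /= /andP [xa ua].
have : g1 x \in map g2 b by rewrite -(perm_mem hp) mem_head.
case/mapP => y yb ey.
have hp' : perm_eq (map g1 a) (map g2 (rem y b)).
  have := perm_map g2 (perm_to_rem yb) => /= h.
  move: (perm_trans hp h); rewrite /= -ey perm_cons; done.
have ub' : uniq (rem y b) by exact: rem_uniq.
have [f' [f1 f2 f3]] := IH _ ua ub' hp'.
exists (fun c => if c == x then y else f' c); split.
- move=> c; rewrite in_cons; case: eqP => [-> _|ne /= ca]; first by [].
  have [h1 h2] := f1 c ca; split => //.
  by move: h1; rewrite (mem_rem_uniq _ ub) !inE => /andP [].
- move=> c1 c2; rewrite !in_cons.
  case: (eqVneq c1 x) => [->|n1]; case: (eqVneq c2 x) => [->|n2] //= h1 h2.
  + move=> e; have := (f1 c2 h2).1; rewrite -e (mem_rem_uniq _ ub) !inE.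
    by rewrite eqxx.
  + move=> e; have := (f1 c1 h1).1; rewrite e (mem_rem_uniq _ ub) !inE.
    by rewrite eqxx.
  + exact: f2.
- move=> d db; case: (eqVneq d y) => [->|ne].
    by exists x; rewrite ?mem_head ?eqxx.
  have : d \in rem y b by rewrite (mem_rem_uniq _ ub) !inE ne.
  case/f3 => c ca <-; exists c; first by rewrite in_cons ca orbT.
  by case: eqP => // ex; move: xa; rewrite -ex ca.
Qed.

Section Proof.
Variable S : finType.

Lemma nl_total : total (@nl_le S).
Proof. by move=> a b; rewrite /nl_le leq_total. Qed.
Lemma nl_trans : transitive (@nl_le S).
Proof. by move=> a b c; rewrite /nl_le; exact: leq_trans. Qed.
Lemma nl_anti : antisymmetric (@nl_le S).
Proof. move=> a b /anti_leq h; apply: (pcan_inj (@pickleK (nlabel S))); exact: h. Qed.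

Section Net.
Variable N : network S.

Definition rch (v : node N) := #|[pred w | connect (@edge S N) v w]|.

Lemma rch_child v w : edge v w -> rch w < rch v.
Proof.
move=> e; apply: proper_card; apply/properP; split.
  apply/subsetP => x; rewrite !inE /= => cx; exact: connect_trans (connect1 e) cx.
exists v; rewrite !inE /=; [exact: connect0 | exact: net_acyclic e].
Qed.

Lemma rch_pos v : 0 < rch v.
Proof. apply/card_gt0P; exists v; rewrite inE /=; exact: connect0. Qed.

Lemma rch_le v : rch v <= #|node N|.
Proof. exact: max_card. Qed.

Lemma ell_fuel_stable n m v : rch v <= n -> rch v <= m -> ell_fuel n v = ell_fuel m v.
Proof.
elim: n m v => [|n IH] m v hn hm.
  by move: (rch_pos v); rewrite ltnNge hn.
case: m hm => [|m] hm; first by move: (rch_pos v); rewrite ltnNge hm.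
rewrite /=; case: pickP => // _.
congr msetN; apply/eq_in_map => w; rewrite mem_enum => e.
apply: IH; rewrite -ltnS.
  exact: leq_trans (rch_child e) hn.
exact: leq_trans (rch_child e) hm.
Qed.

Lemma leafP v : is_leaf v -> exists i, v = leaf_lab N i.
Proof. by rewrite /is_leaf net_leaves => /codomP. Qed.

Lemma ell_leaf i : ell (leaf_lab N i) = GenTree.Leaf i :> nlabel S.
Proof.
rewrite /ell; have := rch_le (leaf_lab N i); have := rch_pos (leaf_lab N i).
case: #|node N| => [|n] h1 h2; first by move: h1; rewrite ltnNge h2.
rewrite /=; case: pickP => [j /eqP /net_lab_inj -> //|].
by move/(_ i); rewrite eqxx.
Qed.

Lemma ell_node v : ~~ is_leaf v -> ell v = msetN [seq ell w | w : node N <- enum (edge v)].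
Proof.
move=> nl; rewrite {1}/ell; have := rch_le v; have := rch_pos v.
case E: #|node N| => [|n] h1 h2; first by move: h1; rewrite ltnNge h2.
rewrite /=; case: pickP => [i /eqP ei | _].
  by move: nl; rewrite /is_leaf net_leaves -ei codom_f.
congr msetN; apply/eq_in_map => w; rewrite mem_enum => e.
rewrite /ell; apply: ell_fuel_stable; last exact: rch_le.
by rewrite -ltnS -E; exact: leq_trans (rch_child e) (rch_le v).
Qed.

End Net.

Lemma equiv_ell (N1 N2 : network S) u v : @Defs.equiv S N1 N2 u v -> ell u = ell v.
Proof.
elim=> [i|u' v' f nu nv ef finj fsurj _ IH]; first by rewrite !ell_leaf.
rewrite !ell_node //; rewrite /msetN; congr (GenTree.Node 0 _); apply/(perm_sortP nl_total nl_trans nl_anti).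
have -> : [seq ell w | w : node N1 <- enum (edge u')] = [seq ell (f w) | w : node N1 <- enum (edge u')].
  apply/eq_in_map => w; rewrite mem_enum; exact: IH.
rewrite (map_comp (@ell _ N2) f); apply: perm_map; apply: uniq_perm.
- rewrite map_inj_in_uniq ?enum_uniq //; move=> x y; rewrite !mem_enum; exact: finj.
- exact: enum_uniq.
- move=> d; rewrite mem_enum; apply/mapP/idP => [[c]|].
    by rewrite mem_enum => ec ->; exact: ef.
  by move=> /fsurj [c ec <-]; exists c; rewrite ?mem_enum.
Qed.

Lemma ell_equiv_n (N1 N2 : network S) n (u : node N1) (v : node N2) :
  rch u <= n -> ell u = ell v -> Defs.equiv u v.
Proof.
elim: n u v => [|n IH] u v hu.
  by move: (rch_pos u); rewrite ltnNge hu.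
case: (boolP (is_leaf u)) => lu.
  have [i ->] := leafP lu; rewrite ell_leaf.
  case: (boolP (is_leaf v)) => lv.
    by have [j ->] := leafP lv; rewrite ell_leaf => [[->]]; exact: equiv_leaf.
  by rewrite ell_node.
case: (boolP (is_leaf v)) => lv.
  by have [j ->] := leafP lv; rewrite ell_leaf ell_node.
rewrite !ell_node //; case=> /(perm_sortP nl_total nl_trans nl_anti) hp.
have [f [f1 f2 f3]] := match_perm v (enum_uniq _) (enum_uniq _) hp.
apply: (@equiv_node _ _ _ _ _ f) => //.
- by move=> c ec; have := (f1 c); rewrite !mem_enum => /(_ ec) [].
- by move=> x y hx hy; apply: f2; rewrite mem_enum.
- move=> d ed; have [|c h1 h2] := f3 d; first by rewrite mem_enum.
  by exists c => //; rewrite mem_enum in h1.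
- move=> c ec; apply: IH.
    by rewrite -ltnS; exact: leq_trans (rch_child ec) hu.
  by have := f1 c; rewrite mem_enum => /(_ ec) [_ ->].
Qed.

Lemma equivE (N1 N2 : network S) (u : node N1) (v : node N2) :
  Defs.equiv u v <-> ell u = ell v.
Proof.
split; first exact: equiv_ell.
exact: (ell_equiv_n (rch_le u)).
Qed.

Section Count.
Variable N : network S.

Lemma kappa_count (v : node N) : kappa v = count_mem (ell v) (Upsilon N).
Proof.
rewrite /kappa /Upsilon count_map count_enum_card.
apply: eq_card => w; rewrite inE /=.
apply/asboolP/eqP => [/equivE -> //|e]; apply/equivE; by rewrite e.
Qed.

Lemma max_exists (U : {set node N}) : maximal_noneq U ->
  forall w : node N, exists2 w', w' \in U & ell w' = ell w.
Proof.
move=> [pU mU] w.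
case: (boolP [exists w', (w' \in U) && (ell w' == ell w)]).
  by case/existsP => w' /andP [h /eqP e]; exists w'.
rewrite negb_exists => /forallP hn.
have pU' : pairwise_noneq (w |: U).
  move=> a b; rewrite !in_setU1.
  case/orP => [/eqP ->|ha]; case/orP => [/eqP ->|hb] //.
  - by rewrite eqxx.
  - move=> _ /equivE e; move: (hn b); rewrite hb /= e eqxx.
    done.
  - move=> _ /equivE e; move: (hn a); rewrite ha /= e eqxx.
    done.
  - exact: pU.
have := mU _ (subsetUr _ _) pU' => e.
have wU : w \in U by rewrite -e setU11.
by move: (hn w); rewrite wU eqxx.
Qed.

Lemma sum_U (U : {set node N}) (G : nlabel S -> nat) : maximal_noneq U ->
  \sum_(v in U) G (ell v) = \sum_(x <- undup (Upsilon N)) G x.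
Proof.
move=> hU; rewrite -big_enum -(big_map (@ell _ N) predT G).
apply: perm_big; apply: uniq_perm.
- rewrite map_inj_in_uniq ?enum_uniq //.
  move=> u w; rewrite !mem_enum => hu hw e.
  case: (eqVneq u w) => // ne; exfalso.
  by apply: (hU.1 u w hu hw ne); apply/equivE.
- exact: undup_uniq.
- move=> x; rewrite mem_undup; apply/mapP/mapP.
    by case=> u _ ->; exists u; rewrite ?mem_enum.
  case=> w _ ->; have [w' h1 h2] := max_exists hU w.
  by exists w'; rewrite ?mem_enum.
Qed.

End Count.

Lemma delta_eq (N1 N2 : network S) (U2 : {set node N2}) (v1 : node N1) :
  maximal_noneq U2 ->
  delta U2 v1 = count_mem (ell v1) (Upsilon N1) - count_mem (ell v1) (Upsilon N2).
Proof.
move=> hU; rewrite /delta; case: pickP => [w /andP [wU /asboolP /equivE e] | none].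
  by rewrite !kappa_count e.
rewrite kappa_count; suff -> : count_mem (ell v1) (Upsilon N2) = 0 by rewrite subn0.
apply/count_memPn; apply/negP => /mapP [w _ ew].
have [w' w'U e'] := max_exists hU w.
move: (none w'); rewrite w'U /=.
suff -> : `[< Defs.equiv v1 w' >] by [].
by apply/asboolP/equivE; rewrite e' ew.
Qed.

Lemma restrict (s s1 : seq (nlabel S)) (G : nlabel S -> nat) :
  uniq s -> {subset s1 <= s} -> (forall x, x \notin s1 -> G x = 0) ->
  \sum_(x <- s) G x = \sum_(x <- undup s1) G x.
Proof.
move=> us sub h0.
rewrite (bigID (fun x => x \in s1)) /= [X in _ + X]big1 ?addn0; last first.
  by move=> x /h0.
rewrite -big_filter; apply: perm_big; apply: uniq_perm.
- exact: filter_uniq.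
- exact: undup_uniq.
- move=> x; rewrite mem_filter mem_undup.
  by case hx: (x \in s1) => //=; rewrite sub.
Qed.

End Proof.

Theorem proposition3 (S : finType) (N1 N2 : network S)
    (U1 : {set node N1}) (U2 : {set node N2}) :
  maximal_noneq U1 -> maximal_noneq U2 ->
  nakhleh U1 U2 = ((symdiff_size (Upsilon N1) (Upsilon N2))%:R / 2%:R)%R.
Proof.
move=> h1 h2; rewrite /nakhleh; congr (_%:R / _)%R.
set M1 := Upsilon N1; set M2 := Upsilon N2.
rewrite (eq_bigr (fun v => (fun x => count_mem x M1 - count_mem x M2) (ell v)));
  last by move=> v _; exact: delta_eq.
rewrite [X in _ + X](eq_bigr (fun v => (fun x => count_mem x M2 - count_mem x M1) (ell v)));
  last by move=> v _; exact: delta_eq.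
rewrite (sum_U (fun x => count_mem x M1 - count_mem x M2) h1) (sum_U (fun x => count_mem x M2 - count_mem x M1) h2).
rewrite /symdiff_size big_split /= -/M1 -/M2.
have e1 : \sum_(i <- undup (M1 ++ M2)) (count_mem i M1 - count_mem i M2) =
          \sum_(x <- undup M1) (count_mem x M1 - count_mem x M2).
  apply: restrict; first exact: undup_uniq.
    by move=> x hx; rewrite mem_undup mem_cat hx.
  by move=> x /count_memPn ->.
have e2 : \sum_(i <- undup (M1 ++ M2)) (count_mem i M2 - count_mem i M1) =
          \sum_(x <- undup M2) (count_mem x M2 - count_mem x M1).
  apply: restrict; first exact: undup_uniq.
    by move=> x hx; rewrite mem_undup mem_cat hx orbT.
  by move=> x /count_memPn ->.
by rewrite e1 e2.
Qed.
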